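(* Let $G=(V,E)$ be a simple graph with $V=\{1,\dots,n\}$ and let $\mathrm{SOL}(G)$ be the solution set of $\mathrm{LCP}(A+I,-\mathbf{e})$. Then: (a) $0\notin\mathrm{SOL}(G)$; (b) $(A+I)x\geq x$ for all $x\in\mathrm{SOL}(G)$; (c) $\mathrm{SOL}(G)\subseteq[0,1]^n$; (d) if $G$ is the disjoint union of graphs $G_1$ and $G_2$ (no edges between them), then, ordering coordinates so that those of $G_1$ come first, $\mathrm{SOL}(G)=\mathrm{SOL}(G_1)\times\mathrm{SOL}(G_2)$; (e) if $x\in\mathrm{SOL}(G)$, then $\sigma(x)$ is a dominating set of $G$; (f) if $x\in\mathrm{SOL}(G)$, then the subvector $\hat x:=x_{\sigma(x)}$ belongs to $\mathrm{SOL}(G_{\sigma(x)})$ and $\sigma(\hat x)=V(G_{\sigma(x)})$.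
   Context: $A$ is the adjacency matrix of $G$, $I$ the $n\times n$ identity and $\mathbf{e}$ the all-ones vector. $x$ solves $\mathrm{LCP}(A+I,-\mathbf{e})$ iff $x\geq 0$, $(A+I)x\geq\mathbf{e}$ and $x^\top((A+I)x-\mathbf{e})=0$. For a graph $H$, $\mathrm{SOL}(H)$ denotes the solution set of $\mathrm{LCP}(A_H+I,-\mathbf{e})$ with $A_H$ its adjacency matrix. The support of $x$ is $\sigma(x):=\{i\in V\mid x_i>0\}$. For $S\subseteq V$, $G_S$ is the subgraph induced by $S$ and $x_S$ the subvector of $x$ indexed by $S$. A set $S\subseteq V$ is dominating if every vertex outside $S$ has a neighbour in $S$. *)

(* Defs.v *)
From HB Require Import structures.
From mathcomp Require Import all_boot all_order all_algebra.
From mathcomp Require Import reals.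
Set Implicit Arguments. Unset Strict Implicit. Unset Printing Implicit Defensive.
Import Order.TTheory GRing.Theory Num.Theory.
Local Open Scope ring_scope.

Section Defs.
Variable R : realType.
Variable V : finType.

Definition simple_graph (e : rel V) : Prop :=
  symmetric e /\ irreflexive e.

Definition adjmat (e : rel V) : V -> V -> R := fun i j => (e i j)%:R.
Definition idmat : V -> V -> R := fun i j => (i == j)%:R.
Definition addmat (M N : V -> V -> R) : V -> V -> R := fun i j => M i j + N i j.
Definition mulmv (M : V -> V -> R) (x : V -> R) : V -> R :=
  fun i => \sum_(j : V) M i j * x j.
Definition onesv : V -> R := fun _ => 1.

Definition LCP_sol (M : V -> V -> R) (q : V -> R) (x : V -> R) : Prop :=
  [/\ forall i, 0 <= x i,
      forall i, 0 <= mulmv M x i + q i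
    & \sum_(i : V) x i * (mulmv M x i + q i) = 0].

Definition SOL (e : rel V) (x : V -> R) : Prop :=
  LCP_sol (addmat (adjmat e) idmat) (fun i => - onesv i) x.

Definition supp (x : V -> R) : {set V} := [set i | 0 < x i].

Definition dominating (e : rel V) (S : {set V}) : Prop :=
  forall v, v \notin S -> exists2 u, u \in S & e v u.

End Defs.

Definition induced (V : finType) (e : rel V) (S : {set V}) : rel {v : V | v \in S} :=
  fun u w => e (val u) (val w).

Definition subvec (R : Type) (V : finType) (x : V -> R) (S : {set V})
  : {v : V | v \in S} -> R := fun u => x (val u).

Arguments induced [V] e S _ _.
Arguments subvec [R V] x S _.

(* Main.v *)
Require Import Defs.
From HB Require Import structures.
From mathcomp Require Import all_boot all_order all_algebra.
From mathcomp Require Import reals.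
Import Order.TTheory GRing.Theory Num.Theory.
Local Open Scope ring_scope.

Section Aux.
Variable R : realType.

Notation MM e := (addmat (@adjmat R _ e) (@idmat R _)).

Lemma SOLP (T : finType) (e : rel T) (x : T -> R) :
  SOL e x <-> forall i, [/\ 0 <= x i, 0 <= mulmv (MM e) x i - 1
                          & x i * (mulmv (MM e) x i - 1) = 0].
Proof.
rewrite /SOL /LCP_sol /onesv; split.
  case=> H1 H2 H3 i.
  have := psumr_eq0P (P := predT) (F := fun i => x i * (mulmv (MM e) x i - 1)).
  move=> /(_ _) P.
  have Hz := P (fun j _ => mulr_ge0 (H1 j) (H2 j)) H3 i isT.
  by split.
move=> H; split.
- by move=> i; case: (H i).
- by move=> i; case: (H i).
- by apply: big1 => i _; case: (H i).
Qed.

Lemma mulmv_split (T : finType) (e : rel T) (x : T -> R) i :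
  mulmv (MM e) x i = x i + \sum_j (e i j)%:R * x j.
Proof.
rewrite /mulmv /addmat /adjmat /idmat.
under eq_bigr do rewrite mulrDl.
rewrite big_split /= addrC; congr (_ + _).
rewrite (bigD1 i) //= eqxx mul1r big1 ?addr0 // => j /negbTE.
by rewrite eq_sym => ->; rewrite mul0r.
Qed.

Lemma subsum (T : finType) (S : {set T}) (f : T -> R) :
  (forall j, j \notin S -> f j = 0) ->
  \sum_j f j = \sum_(w : {v : T | v \in S}) f (val w).
Proof.
move=> H; rewrite (bigID (mem S)) /= [X in _ + X]big1 ?addr0; last first.
  by move=> j; apply: H.
exact: (big_sub S f).
Qed.

Lemma mulmv_sub (T : finType) (e : rel T) (S : {set T}) (x : T -> R)
  (i : {v : T | v \in S}) :
  (forall j, j \notin S -> (e (val i) j)%:R * x j = 0) ->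
  mulmv (MM (induced e S)) (subvec x S) i = mulmv (MM e) x (val i).
Proof.
move=> H; rewrite !mulmv_split /subvec; congr (_ + _).
by rewrite (@subsum _ S (fun j => (e (val i) j)%:R * x j)).
Qed.

End Aux.

Theorem lemma1 (R : realType) (V : finType) (e : rel V) :
  simple_graph e -> (0 < #|V|)%N ->
  (* (a) *) ~ SOL (R:=R) e (fun _ => 0) /\
      (* (b) *) (forall x : V -> R, SOL e x ->
                   forall i, x i <= mulmv (addmat (@adjmat R V e) (@idmat R V)) x i) /\
      (* (c) *) (forall x : V -> R, SOL e x -> forall i, 0 <= x i <= 1) /\
      (* (d) *) (forall S : {set V},
                   (forall u v, u \in S -> v \notin S -> ~~ e u v) ->
                   forall x : V -> R,
                     SOL e x <->
                     SOL (induced e S) (subvec x S) /\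
                     SOL (induced e (~: S)) (subvec x (~: S))) /\
      (* (e) *) (forall x : V -> R, SOL e x -> dominating e (supp x)) /\
      (* (f) *) (forall x : V -> R, SOL e x ->
                   SOL (induced e (supp x)) (subvec x (supp x)) /\
                   supp (subvec x (supp x)) = [set: {v : V | v \in supp x}]).
Proof.
move=> [esym eirr] hV.
have sum_ge0 : forall (x : V -> R) i, (forall j, 0 <= x j) ->
    0 <= \sum_j (e i j)%:R * x j.
  by move=> x i Hx; apply: sumr_ge0 => j _; apply: mulr_ge0.
split.
  case/card_gt0P: hV => i _ /SOLP /(_ i) [_ + _].
  rewrite mulmv_split big1 /= ?add0r; last by move=> j _; rewrite mulr0.
  by rewrite oppr_ge0 ler10.
split.
  move=> x /SOLP H i; rewrite mulmv_split lerDl; apply: sum_ge0.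
  by move=> j; case: (H j).
split.
  move=> x /SOLP H i; case: (H i) => H1 H2 H3; rewrite H1 /=.
  move/eqP: H3; rewrite mulf_eq0 => /orP[/eqP->|]; first by rewrite ler01.
  rewrite subr_eq0 mulmv_split => /eqP H4.
  rewrite -H4 lerDl; apply: sum_ge0 => j; by case: (H j).
split.
  move=> S HS x.
  rewrite (SOLP _ _ (induced e S)) (SOLP _ _ (induced e (~: S))) SOLP.
  have L1 : forall u : {v | v \in S},
      mulmv (addmat (@adjmat R _ (induced e S)) (@idmat R _)) (subvec x S) u =
      mulmv (addmat (@adjmat R _ e) (@idmat R _)) x (val u).
    move=> u; apply: mulmv_sub => j hj.
    by rewrite (negbTE (HS _ _ (valP u) hj)) mul0r.
  have L2 : forall u : {v | v \in ~: S},
      mulmv (addmat (@adjmat R _ (induced e (~: S))) (@idmat R _)) (subvec x (~: S)) u =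
      mulmv (addmat (@adjmat R _ e) (@idmat R _)) x (val u).
    move=> u; apply: mulmv_sub => j hj.
    have hu := valP u; rewrite inE in hu; rewrite inE negbK in hj.
    by rewrite esym (negbTE (HS _ _ hj hu)) mul0r.
  split.
    move=> H; split=> u; [rewrite L1|rewrite L2]; exact: H.
  case=> H1 H2 i; case: (boolP (i \in S)) => hi.
    by have := H1 (exist _ i hi); rewrite L1.
  have hi' : i \in ~: S by rewrite inE.
  by have := H2 (exist _ i hi'); rewrite L2.
split.
  move=> x /SOLP H v hv.
  have xv : x v = 0.
    case: (H v) => h0 _ _; apply/eqP; rewrite eq_le h0 andbT.
    by move: hv; rewrite inE real_ltNge ?realE ?h0 ?lexx ?orbT // negbK.
  have [u /andP[hu heu]|none] := pickP [pred u | (u \in supp x) && e v u].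
    by exists u.
  exfalso; case: (H v) => _ H2 _; move: H2.
  rewrite mulmv_split xv add0r big1 ?sub0r ?oppr_ge0 ?ler10 //.
  move=> j _; have := none j; rewrite /= inE.
  case: (e v j) => /=; last by rewrite mul0r.
  rewrite andbT => hj; rewrite mul1r; apply/eqP; rewrite eq_le.
  case: (H j) => -> _ _; rewrite andbT.
  by rewrite leNgt hj.
move=> x /SOLP H; split.
  apply/SOLP => u.
  rewrite mulmv_sub; first exact: H.
  move=> j hj; rewrite inE in hj.
  have -> : x j = 0.
    case: (H j) => h0 _ _; apply/eqP; rewrite eq_le h0 andbT.
    by rewrite leNgt.
  by rewrite mulr0.
by apply/setP => u; rewrite !inE /subvec; have := valP u; rewrite inE.
Qed.
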